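(* There is an absolute constant $C>0$ with the following property. Let $m\ge1$, $0\le k\le m$, and $\pi\in\mathcal P_{\le2}(m)$, and let $N^1_{k,\pi}(m)$ be the number of involutions $\sigma\in\mathrm{Sym}_m$ that preserve $\pi$ and have exactly $k$ fixed points. Then \[ N^1_{k,\pi}(m)\le C^m(m!)^{\frac12-\frac{\pi_2}{2m}-\frac k{4m}} . \]
   Context: $\mathcal P_{\le2}(m)$ is the set of set partitions of $\{1,\dots,m\}$ with all blocks of size at most $2$, and $\pi_2$ is the number of blocks of size $2$ of $\pi$. A permutation preserves $\pi$ if it maps each block of $\pi$ onto a block of $\pi$. Involutions are elements $\sigma$ with $\sigma^2=1$ (the identity included). *)

(* Defs.v *)
From mathcomp Require Import all_boot all_fingroup.
From Stdlib Require Import Reals.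

Set Implicit Arguments.
Unset Strict Implicit.
Unset Printing Implicit Defensive.

Local Open Scope group_scope.

(* P is a set partition of {0,...,m-1} (standing for {1,...,m}) with all
   blocks of size at most 2. *)
Definition le2_partition (m : nat) (P : {set {set 'I_m}}) : bool :=
  partition P [set: 'I_m] && [forall B in P, #|B| <= 2]%N.

Definition pi2 (m : nat) (P : {set {set 'I_m}}) : nat :=
  #|[set B in P | #|B| == 2]|.

Definition preserves (m : nat) (s : {perm 'I_m}) (P : {set {set 'I_m}}) : bool :=
  [forall B in P, (s @: B) \in P].

Definition involution (m : nat) (s : {perm 'I_m}) : bool := s * s == 1.

Definition nfix (m : nat) (s : {perm 'I_m}) : nat := #|[set x | s x == x]|.

Definition N1 (m k : nat) (P : {set {set 'I_m}}) : nat :=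
  #|[set s : {perm 'I_m} | [&& involution s, preserves s P & nfix s == k]]|.

(* Main.v *)
Require Import Defs.
From mathcomp Require Import all_boot all_fingroup.
From mathcomp Require Import zify.
From Stdlib Require Import Reals Lra Lia.

Set Implicit Arguments.
Unset Strict Implicit.
Unset Printing Implicit Defensive.

Section Comb.
Variables (m : nat) (P : {set {set 'I_m}}).
Hypothesis hP : le2_partition P.

Let hpart : partition P [set: 'I_m].
Proof. by case/andP: hP. Qed.
Let hcard : forall B, B \in P -> #|B| <= 2.
Proof. by case/andP: hP => _ /forall_inP. Qed.
Let hcov : cover P = [set: 'I_m].
Proof. by case/and3P: hpart => /eqP. Qed.
Let htriv : trivIset P.
Proof. by case/and3P: hpart. Qed.

Definition blk x := pblock P x.

Lemma blk_mem x : x \in blk x.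
Proof. by rewrite mem_pblock hcov inE. Qed.

Lemma blkP x : blk x \in P.
Proof. by apply: pblock_mem; rewrite hcov inE. Qed.

Lemma blk_eq x y : y \in blk x -> blk y = blk x.
Proof. by move=> hy; apply: def_pblock => //; exact: blkP. Qed.

Definition q x := odflt x [pick y in blk x | y != x].

Lemma blk_q x : blk x = [set x; q x].
Proof.
rewrite /q; case: pickP => [y /andP [hy hyx]|hn] /=.
  apply/eqP; rewrite eq_sym eqEcard cards2 eq_sym hyx (hcard (blkP x)) andbT.
  by apply/subsetP => z; rewrite !inE => /orP [/eqP->|/eqP->] //; exact: blk_mem.
apply/setP => z; rewrite !inE orbb; apply/idP/idP => [hz|/eqP ->]; last exact: blk_mem.
by have := hn z; rewrite hz /=; case: eqP.
Qed.

Lemma in_blk x y : (y \in blk x) = (y == x) || (y == q x).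
Proof. by rewrite blk_q !inE. Qed.

Lemma q_in x : q x \in blk x.
Proof. by rewrite in_blk eqxx orbT. Qed.

Lemma q_spec x y : y \in blk x -> y != x -> q x = y.
Proof. by rewrite in_blk => /orP [/eqP->|/eqP->]; rewrite ?eqxx. Qed.

Lemma blk_qx x : blk (q x) = blk x.
Proof. exact: blk_eq (q_in x). Qed.

Lemma qq x : q (q x) = x.
Proof.
case: (q x =P x) => [hx|h]; first by rewrite hx hx.
apply: q_spec; first by rewrite blk_qx blk_mem.
by apply/eqP => hx; apply: h.
Qed.


Lemma blk_s (s : {perm 'I_m}) x : preserves s P -> blk (s x) = s @: blk x.
Proof.
move=> /forall_inP hs; apply: def_pblock => //; first exact: hs (blkP x).
by apply: imset_f; exact: blk_mem.
Qed.

Lemma q_s (s : {perm 'I_m}) x : preserves s P -> q (s x) = s (q x).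
Proof.
move=> hs; case: (q x =P x) => [hx|h].
  have := q_in (s x); rewrite blk_s // => /imsetP [y].
  by rewrite in_blk hx orbb => /eqP -> ->.
apply: q_spec; first by rewrite blk_s //; apply: imset_f; exact: q_in.
by rewrite (inj_eq perm_inj); apply/eqP.
Qed.

Definition rep (x : 'I_m) := if (x <= q x)%N then x else q x.

Lemma rep_q (x : 'I_m) : rep (q x) = rep x.
Proof.
rewrite /rep qq; case: leqP => h1; case: leqP => h2 //; last by lia.
by apply: val_inj => /=; lia.
Qed.

Lemma rep_id (x : 'I_m) : (x <= q x)%N -> rep x = x.
Proof. by rewrite /rep => ->. Qed.

Lemma rep_isrep (x : 'I_m) : (rep x <= q (rep x))%N.
Proof.
rewrite /rep; case: (boolP (x <= q x)%N) => h //.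
rewrite qq; lia.
Qed.

Lemma rep_cases (x : 'I_m) : rep x = x \/ rep x = q x.
Proof. by rewrite /rep; case: leqP; [left|right]. Qed.

Lemma rep_s (s : {perm 'I_m}) y : preserves s P -> rep (s (rep y)) = rep (s y).
Proof. by move=> hs; case: (rep_cases y) => -> //; rewrite -(q_s _ hs) rep_q. Qed.

Lemma rep_eq (y x : 'I_m) : rep y = x -> y = x \/ y = q x.
Proof. by case: (rep_cases y) => -> <-; [left|right; rewrite qq]. Qed.


Lemma invo (s : {perm 'I_m}) : involution s -> forall x, s (s x) = x.
Proof. by move/eqP => h x; rewrite -permM h perm1. Qed.

Definition Reps := [set x : 'I_m | (x <= q x)%N].
Definition Dset := [set x : 'I_m | (x < q x)%N].
Definition L0 (s : {perm 'I_m}) := [set x : 'I_m | (x <= q x)%N && (nat_of_ord (rep (s x)) == x)].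
Definition L1 (s : {perm 'I_m}) := [set x : 'I_m | (x <= q x)%N && (x < rep (s x))%N].
Definition L2 (s : {perm 'I_m}) := [set x : 'I_m | (x <= q x)%N && (rep (s x) < x)%N].

Lemma rep_rep_s (s : {perm 'I_m}) (x : 'I_m) : involution s -> preserves s P ->
  (x <= q x)%N -> rep (s (rep (s x))) = x.
Proof. by move=> hi hs hx; rewrite rep_s // invo // rep_id. Qed.

Lemma cardL12 s : involution s -> preserves s P -> #|L1 s| <= #|L2 s|.
Proof.
move=> hi hs.
rewrite -(@card_in_imset _ _ (fun x => rep (s x))).
  apply: subset_leq_card; apply/subsetP => y /imsetP [x].
  rewrite !inE => /andP [hx1 hx2] ->; rewrite rep_isrep /= rep_rep_s //.
move=> x1 x2; rewrite !inE => /andP [h1 _] /andP [h2 _] he.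
by rewrite -(rep_rep_s hi hs h1) he rep_rep_s.
Qed.

Lemma card_setU_le (T : finType) (A B : {set T}) : #|A :|: B| <= #|A| + #|B|.
Proof. by rewrite cardsU leq_subr. Qed.

Lemma cardfix s : involution s -> preserves s P -> nfix s <= 2 * #|L0 s|.
Proof.
move=> hi hs; rewrite /nfix.
apply: (@leq_trans #|L0 s :|: q @: L0 s|).
  apply: subset_leq_card; apply/subsetP => y; rewrite inE => /eqP hy.
  have hr : rep y \in L0 s by rewrite inE rep_isrep /= rep_s // hy.
  case: (@rep_eq y (rep y) erefl) => hy'; rewrite inE; apply/orP.
    by left; rewrite hy'.
  by right; rewrite hy'; apply: imset_f.
apply: leq_trans (card_setU_le _ _) _.
by rewrite mul2n -addnn leq_add2l leq_imset_card.
Qed.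

Lemma card3 (T : finType) (a b c r : pred T) :
  (forall x, a x + b x + c x <= r x) ->
  #|[set x | a x]| + #|[set x | b x]| + #|[set x | c x]| <= #|[set x | r x]|.
Proof.
move=> H; rewrite !cardsE -!sum1_card !(big_mkcond (fun i => i \in _)) -!big_split /=.
apply: leq_sum => x _; have := H x; rewrite !unfold_in.
by case: (a x); case: (b x); case: (c x); case: (r x).
Qed.

Lemma cardL012 s : #|L0 s| + #|L1 s| + #|L2 s| <= #|Reps|.
Proof.
apply: card3 => x.
case: (x <= q x)%N => //=.
by case: ltngtP.
Qed.

Lemma cardRD : #|Reps| + #|Dset| <= m.
Proof.
have hc := cardsC Reps; rewrite card_ord in hc.
suff : #|Dset| <= #|~: Reps| by lia.
rewrite -(card_imset _ (can_inj qq)).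
apply: subset_leq_card; apply/subsetP => y /imsetP [x].
rewrite !inE => hx ->; rewrite qq; lia.
Qed.

Lemma cardpi2 : pi2 P <= #|Dset|.
Proof.
rewrite /pi2; apply: leq_trans (leq_imset_card blk Dset).
apply: subset_leq_card; apply/subsetP => B; rewrite inE => /andP [hB /cards2P [x [y [hxy hBe]]]]; subst B.
have hx : blk x = [set x; y] by apply: def_pblock; rewrite // !inE eqxx.
have hy : blk y = [set x; y] by apply: def_pblock; rewrite // !inE eqxx orbT.
have qx : q x = y by apply: q_spec; rewrite ?hx ?inE ?eqxx ?orbT // eq_sym.
have qy : q y = x by apply: q_spec; rewrite ?hy ?inE ?eqxx.
case: (ltngtP x y) => h.
- by rewrite -hx; apply: imset_f; rewrite inE qx.
- by rewrite -hy; apply: imset_f; rewrite inE qy.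
- by move: hxy; rewrite (val_inj h) eqxx.
Qed.

Lemma key s : involution s -> preserves s P ->
  4 * #|L1 s| + 2 * pi2 P + nfix s <= 2 * m.
Proof.
move=> hi hs.
have := cardL12 hi hs; have := cardfix hi hs; have := cardL012 s;
have := cardRD; have := cardpi2; lia.
Qed.


Definition Sset (s : {perm 'I_m}) := [set x : 'I_m | (x <= q x)%N && (x <= rep (s x))%N].

Definition code (j : nat) (x0 : 'I_m) (s : {perm 'I_m}) :
  ({ffun 'I_m -> bool} * {ffun 'I_m -> bool} * {ffun 'I_m -> bool} * {ffun 'I_j -> 'I_m}) :=
  ([ffun x => x \in Sset s], [ffun x => x \in L1 s], [ffun x => s x != x],
   [ffun i : 'I_j => nth x0 (map s (enum (L1 s))) i]).

Lemma code_inj j x0 (s1 s2 : {perm 'I_m}) :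
  involution s1 -> preserves s1 P -> involution s2 -> preserves s2 P ->
  #|L1 s1| <= j -> code j x0 s1 = code j x0 s2 -> s1 = s2.
Proof.
move=> i1 p1 i2 p2 hj [hS hT hB hf].
have hS' x : (x \in Sset s1) = (x \in Sset s2).
  by have := congr1 (fun f : {ffun 'I_m -> bool} => f x) hS; rewrite !ffunE.
have hT' x : (x \in L1 s1) = (x \in L1 s2).
  by have := congr1 (fun f : {ffun 'I_m -> bool} => f x) hT; rewrite !ffunE.
have hB' x : (s1 x != x) = (s2 x != x).
  by have := congr1 (fun f : {ffun 'I_m -> bool} => f x) hB; rewrite !ffunE.
have hTe : L1 s1 = L1 s2 by apply/setP => x; rewrite hT'.
have e1 x : x \in L1 s1 -> s1 x = s2 x.
  move=> hx.
  have hi : (index x (enum (L1 s1)) < j)%N.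
    apply: leq_trans hj; rewrite cardE index_mem mem_enum //.
  have := congr1 (fun f : {ffun 'I_j -> 'I_m} => f (Ordinal hi)) hf; rewrite !ffunE /= -hTe.
  have hi' : (index x (enum (L1 s1)) < size (enum (L1 s1)))%N by rewrite index_mem mem_enum.
  by rewrite !(nth_map x0) // nth_index // mem_enum.
have e2 (x : 'I_m) : (x <= q x)%N -> s1 x = s2 x.
  move=> hx.
  case: (boolP (x \in L1 s1)) => hx1; first exact: e1.
  have hx2 : x \notin L1 s2 by rewrite -hT'.
  case: (boolP (x \in Sset s1)) => hxS.
    have hxS2 : x \in Sset s2 by rewrite -hS'.
    have r1 : rep (s1 x) = x.
      move: hxS hx1; rewrite !inE hx /= => h1 h2; apply: val_inj => /=; lia.
    have r2 : rep (s2 x) = x.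
      move: hxS2 hx2; rewrite !inE hx /= => h1 h2; apply: val_inj => /=; lia.
    have := hB' x.
    case: (rep_eq r1) => ->; case: (rep_eq r2) => -> //; rewrite eqxx /=;
      by case: (q x =P x) => [->|].
  have hxS2 : x \notin Sset s2 by rewrite -hS'.
  have lt1 : (rep (s1 x) < x)%N by move: hxS; rewrite !inE hx /=; lia.
  set y := rep (s1 x).
  have hy : (y <= q y)%N by exact: rep_isrep.
  have ry : rep (s1 y) = x by rewrite /y rep_rep_s.
  have hyL : y \in L1 s1 by rewrite inE hy ry.
  have sy := e1 _ hyL.
  have ry2 : rep (s2 y) = x by rewrite -sy.
  have rx2 : rep (s2 x) = y by rewrite -ry2 rep_rep_s.
  case: (rep_eq (erefl (rep (s1 x)))) => h1; case: (rep_eq rx2) => h2;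
    rewrite -/y in h1 *; rewrite ?h1 ?h2 //.
    have e : s2 y = x by rewrite -sy -h1 invo.
    by rewrite -h2 -e invo.
  have e : s1 y = x by rewrite sy -h2 invo.
  by rewrite -h1 -e invo.
apply/permP => x.
case: (leqP x (q x)) => h; first exact: e2.
rewrite -[x]qq -(q_s _ p1) -(q_s _ p2) e2 // qq; lia.
Qed.

End Comb.

Lemma comb (m k : nat) (P : {set {set 'I_m}}) :
    (1 <= m)%N -> (k <= m)%N -> le2_partition P ->
    exists j, (4*j + 2*pi2 P + k <= 2*m)%N /\ (N1 k P <= expn 8 m * expn m j)%N.
Proof.
move=> hm hk hP.
have hDR : #|Dset P| <= #|Reps P|.
  by apply: subset_leq_card; apply/subsetP => x; rewrite !inE; apply: ltnW.
have h2p : 2 * pi2 P <= m.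
  have := cardRD hP; have := cardpi2 hP; lia.
exists ((2*m - 2*pi2 P - k) %/ 4); split.
  have := leq_divM (2*m - 2*pi2 P - k) 4; rewrite mulnC; lia.
pose x0 : 'I_m := Ordinal hm.
rewrite /N1.
have hinj : {in [set s : {perm 'I_m} | [&& involution s, preserves s P & nfix s == k]] &,
   injective (code P ((2*m - 2*pi2 P - k) %/ 4) x0)}.
  move=> s1 s2; rewrite !inE => /and3P [i1 p1 /eqP k1] /and3P [i2 p2 _].
  apply: code_inj => //.
  have := key hP i1 p1; rewrite k1 => h.
  by rewrite leq_divRL //; lia.
apply: leq_trans (leq_card_in _ _ hinj) _.
rewrite !card_prod !card_ffun !card_bool !card_ord -!expnMn.
by [].
Qed.

Open Scope R_scope.

Lemma ln_le (x y : R) : 0 < x -> x <= y -> ln x <= ln y.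
Proof. move=> hx [h|->]; last lra. left; exact: ln_increasing. Qed.

Lemma ln1x (x : R) : 0 < x -> ln (1 + x) <= x.
Proof.
move=> hx. rewrite -{2}(ln_exp x). apply: ln_le; first lra. exact: exp_ineq1_le.
Qed.

Lemma INR_fact_pos n : 0 < INR n`!.
Proof. apply: lt_0_INR; apply/ltP; exact: fact_gt0. Qed.

Lemma ln_fact n : INR n * ln (INR n) <= INR n + ln (INR n`!).
Proof.
elim: n => [|n IH].
  rewrite /= ln_1; lra.
rewrite factS mult_INR ln_mult; last exact: INR_fact_pos; last by apply: lt_0_INR; lia.
rewrite S_INR.
suff: INR n * ln (INR n + 1) <= INR n * ln (INR n) + 1.
  have := pos_INR n; have := ln_1; move=> *.
  have h0 : 0 <= ln (INR n + 1).
    rewrite -ln_1; apply: ln_le; first lra. lra.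
  nra.
case: n IH => [|n] IH.
  rewrite /=; lra.
have hn : 0 < INR n.+1 by apply: lt_0_INR; lia.
have -> : INR n.+1 + 1 = INR n.+1 * (1 + / INR n.+1) by field; lra.
rewrite ln_mult; [|lra|]; last by have := Rinv_0_lt_compat _ hn; lra.
have := @ln1x _ (Rinv_0_lt_compat _ hn).
have : INR n.+1 * / INR n.+1 = 1 by field; lra.
nra.
Qed.

Lemma INR_expn (a n : nat) : INR (expn a n) = pow (INR a) n.
Proof. elim: n => [|n IH]; first by []. rewrite expnS mult_INR IH /=; ring. Qed.

Lemma exp_le (x y : R) : x <= y -> exp x <= exp y.
Proof. move=> [h|->]; last lra. left; exact: exp_increasing. Qed.

Close Scope R_scope.


Theorem lemma5p2 :
  exists C : R, (0 < C)%R /\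
  forall (m k : nat) (P : {set {set 'I_m}}),
    (1 <= m)%N -> (k <= m)%N -> le2_partition P ->
    (INR (N1 k P) <=
       C ^ m * Rpower (INR m`!)
         (1 / 2 - INR (pi2 P) / (2 * INR m) - INR k / (4 * INR m)))%R.
Proof.
exists (8 * exp 1)%R; split; first by have := exp_pos 1; lra.
move=> m k P hm hk hP.
have [j [hj hN]] := comb hm hk hP.
apply: Rle_trans; first by apply: le_INR; apply/leP; exact: hN.
rewrite mult_INR !INR_expn Rpow_mult_distr Rmult_assoc.
have -> : INR 8 = 8%R by rewrite /INR; lra.
apply: Rmult_le_compat_l; first by apply: pow_le; lra.
have hM : (0 < INR m)%R by apply: lt_0_INR; lia.
rewrite -(Rpower_pow _ _ hM) -(Rpower_pow _ _ (exp_pos 1)).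
rewrite /Rpower ln_exp Rmult_1_r -exp_plus.
apply: exp_le.
set e := (X in (X * ln (INR m`!))%R).
have he : (e * INR m * 4 = 2 * INR m - 2 * INR (pi2 P) - INR k)%R.
  rewrite /e; field; lra.
have hj' : (4 * INR j + 2 * INR (pi2 P) + INR k <= 2 * INR m)%R.
  have := le_INR _ _ (elimT leP hj). rewrite -!(plusE, multE) !plus_INR (_ : INR 0 = 0%R) //; lra.
have hjm : (INR j <= INR m)%R by have := pos_INR (pi2 P); have := pos_INR k; lra.
have hL : (0 <= ln (INR m`!))%R.
  rewrite -ln_1; apply: ln_le; first lra.
  change 1%R with (INR 1); apply: le_INR; apply/leP; exact: fact_gt0.
have hlm : (0 <= ln (INR m))%R.
  rewrite -ln_1; apply: ln_le; first lra.
  change 1%R with (INR 1); apply: le_INR; lia.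
have hS := ln_fact m.
have hej : (INR j <= e * INR m)%R by lra.
apply: (Rmult_le_reg_r (INR m)) => //.
have hj0 := pos_INR j.
nra.
Qed.
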